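(* Let $L$ and $M$ be finite-dimensional stem Lie superalgebras over a field of characteristic different from $2,3$. Then $L\sim M$ if and only if $L\cong M$.
   Context: Lie superalgebras: $\mathbb{Z}_2$-graded algebras $L=L_{\bar0}\oplus L_{\bar1}$ with graded skew-symmetric bracket satisfying the graded Jacobi identity; homomorphisms are even bracket-preserving linear maps. $Z(L)$ is the center, $L'=[L,L]$. $L$ is stem if $Z(L)\subseteq L'$. $L\sim M$ (isoclinic) means there are isomorphisms $\varphi:L/Z(L)\to M/Z(M)$ and $\theta:L'\to M'$ with $\theta([l,m])=[k,r]$ whenever $k+Z(M)=\varphi(l+Z(L))$ and $r+Z(M)=\varphi(m+Z(L))$. *)

(* Defs.v *)
From HB Require Import structures.
From mathcomp Require Import all_boot all_order all_algebra.
Set Implicit Arguments. Unset Strict Implicit. Unset Printing Implicit Defensive.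
Import GRing.Theory.
Local Open Scope ring_scope.

Section LieSuper.
Variable F : fieldType.

(* Z_2 is represented by bool: false = 0-bar (even), true = 1-bar (odd). *)
Record is_lie_superalgebra (V : vectType F) (part : bool -> {vspace V})
    (br : V -> V -> V) : Prop := {
  lsa_direct : directv (part false + part true);
  lsa_full : (part false + part true)%VS = fullv;
  lsa_linl : forall (a : F) (x y z : V), br (a *: x + y) z = a *: br x z + br y z;
  lsa_linr : forall (a : F) (x y z : V), br x (a *: y + z) = a *: br x y + br x z;
  lsa_graded : forall (i j : bool) (x y : V),
      x \in part i -> y \in part j -> br x y \in part (i (+) j);
  lsa_skew : forall (i j : bool) (x y : V),
      x \in part i -> y \in part j ->
      br x y = - (((-1) ^+ (i && j) : F) *: br y x);
  lsa_jacobi : forall (i j k : bool) (x y z : V),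
      x \in part i -> y \in part j -> z \in part k ->
      ((-1) ^+ (i && k) : F) *: br x (br y z)
    + ((-1) ^+ (j && i) : F) *: br y (br z x)
    + ((-1) ^+ (k && j) : F) *: br z (br x y) = 0
}.

Record lsa := LSA {
  lsa_sort :> vectType F;
  lsa_part : bool -> {vspace lsa_sort};
  lsa_br : lsa_sort -> lsa_sort -> lsa_sort;
  lsa_ax : is_lie_superalgebra lsa_part lsa_br
}.

Definition lsa_center (L : lsa) (z : L) : Prop := forall x : L, lsa_br z x = 0.

Definition lsa_derived (L : lsa) (x : L) : Prop :=
  exists s : seq (L * L), x = \sum_(q <- s) lsa_br q.1 q.2.

Definition lsa_stem (L : lsa) : Prop :=
  forall z : L, lsa_center z -> lsa_derived z.

Definition lsa_hom (L M : lsa) (f : L -> M) : Prop :=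
  [/\ forall (a : F) (x y : L), f (a *: x + y) = a *: f x + f y,
      forall (b : bool) (x : L), x \in lsa_part L b -> f x \in lsa_part M b
    & forall x y : L, f (lsa_br x y) = lsa_br (f x) (f y)].

Definition lsa_isomorphic (L M : lsa) : Prop :=
  exists f : L -> M, lsa_hom f /\ bijective f.

(* The isomorphism phi : L/Z(L) -> M/Z(M) is represented by a
   function phi0 : L -> M on representatives: phi (l + Z(L)) = phi0 l + Z(M).
   The isomorphism theta : L' -> M' is represented by a function on L whose
   behaviour is only relevant on L'. *)
Record isoclinic_via (L M : lsa) (phi theta : L -> M) : Prop := {
  phi_wd : forall x : L, lsa_center x -> lsa_center (phi x);
  phi_lin : forall (a : F) (x y : L),
      lsa_center (phi (a *: x + y) - (a *: phi x + phi y));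
  phi_even : forall (b : bool) (x : L), x \in lsa_part L b ->
      exists2 y : M, y \in lsa_part M b & lsa_center (phi x - y);
  phi_br : forall x y : L,
      lsa_center (phi (lsa_br x y) - lsa_br (phi x) (phi y));
  phi_inj : forall x : L, lsa_center (phi x) -> lsa_center x;
  phi_surj : forall y : M, exists x : L, lsa_center (y - phi x);
  theta_into : forall x : L, lsa_derived x -> lsa_derived (theta x);
  theta_lin : forall (a : F) (x y : L), lsa_derived x -> lsa_derived y ->
      theta (a *: x + y) = a *: theta x + theta y;
  theta_even : forall (b : bool) (x : L), lsa_derived x ->
      x \in lsa_part L b -> theta x \in lsa_part M b;
  theta_br : forall x y : L, lsa_derived x -> lsa_derived y ->
      theta (lsa_br x y) = lsa_br (theta x) (theta y);
  theta_inj : forall x y : L, lsa_derived x -> lsa_derived y ->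
      theta x = theta y -> x = y;
  theta_surj : forall y : M, lsa_derived y ->
      exists2 x : L, lsa_derived x & theta x = y;
  compat : forall (l m : L) (k r : M),
      lsa_center (k - phi l) -> lsa_center (r - phi m) ->
      theta (lsa_br l m) = lsa_br k r
}.

Definition lsa_isoclinic (L M : lsa) : Prop :=
  exists (phi theta : L -> M), isoclinic_via phi theta.

End LieSuper.

(* Main.v *)
Require Import Defs.
From mathcomp Require Import all_boot all_order all_algebra.
From Stdlib Require Import IndefiniteDescription.
Set Implicit Arguments. Unset Strict Implicit. Unset Printing Implicit Defensive.
Import GRing.Theory.
Local Open Scope ring_scope.

Section Lin.
Variables (F : fieldType) (V W : lmodType F) (f : V -> W).
Hypothesis hf : forall a x y, f (a *: x + y) = a *: f x + f y.
Lemma lin0 : f 0 = 0.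
Proof. have := hf 1 0 0; rewrite !scale1r addr0 => h.
by apply: (addrI (f 0)); rewrite addr0 -{1}h. Qed.
Lemma linD x y : f (x + y) = f x + f y.
Proof. by have := hf 1 x y; rewrite !scale1r. Qed.
Lemma linZ a x : f (a *: x) = a *: f x.
Proof. by have := hf a x 0; rewrite !addr0 lin0 addr0. Qed.
Lemma linN x : f (- x) = - f x.
Proof. by rewrite -scaleN1r linZ scaleN1r. Qed.
Lemma linB x y : f (x - y) = f x - f y.
Proof. by rewrite linD linN. Qed.
Lemma lin_sum I (r : seq I) (P : pred I) (G : I -> V) :
  f (\sum_(i <- r | P i) G i) = \sum_(i <- r | P i) f (G i).
Proof. exact: (big_morph f linD lin0). Qed.
End Lin.

Section Basics.
Variables (F : fieldType) (L : lsa F).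
Local Notation br := (@lsa_br F L).
Local Notation P := (lsa_part L).
Let ax := lsa_ax L.
Local Notation cen := (@lsa_center F L).
Local Notation der := (@lsa_derived F L).

Lemma brl z : forall a x y, (fun u => br u z) (a *: x + y) = a *: (fun u => br u z) x + (fun u => br u z) y.
Proof. by move=> a x y /=; rewrite (lsa_linl ax). Qed.
Lemma brr z : forall a x y, br z (a *: x + y) = a *: br z x + br z y.
Proof. by move=> a x y; rewrite (lsa_linr ax). Qed.

Lemma br0l z : br 0 z = 0. Proof. exact: (lin0 (brl z)). Qed.
Lemma brDl x y z : br (x + y) z = br x z + br y z. Proof. exact: (linD (brl z)). Qed.
Lemma brZl a x z : br (a *: x) z = a *: br x z. Proof. exact: (linZ (brl z)). Qed.
Lemma brNl x z : br (- x) z = - br x z. Proof. exact: (linN (brl z)). Qed.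
Lemma brBl x y z : br (x - y) z = br x z - br y z. Proof. exact: (linB (brl z)). Qed.
Lemma br0r z : br z 0 = 0. Proof. exact: (lin0 (brr z)). Qed.
Lemma brDr x y z : br z (x + y) = br z x + br z y. Proof. exact: (linD (brr z)). Qed.
Lemma brZr a x z : br z (a *: x) = a *: br z x. Proof. exact: (linZ (brr z)). Qed.
Lemma brBr x y z : br z (x - y) = br z x - br z y. Proof. exact: (linB (brr z)). Qed.

Lemma cen0 : cen 0. Proof. by move=> x; rewrite br0l. Qed.
Lemma cenD x y : cen x -> cen y -> cen (x + y).
Proof. by move=> hx hy z; rewrite brDl hx hy addr0. Qed.
Lemma cenZ a x : cen x -> cen (a *: x).
Proof. by move=> hx z; rewrite brZl hx scaler0. Qed.
Lemma cenN x : cen x -> cen (- x).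
Proof. by move=> hx z; rewrite brNl hx oppr0. Qed.
Lemma cenB x y : cen x -> cen y -> cen (x - y).
Proof. by move=> hx hy; apply: cenD => //; apply: cenN. Qed.
Lemma cen_sum I (r : seq I) (G : I -> L) :
  (forall i, cen (G i)) -> cen (\sum_(i <- r) G i).
Proof.
move=> h; elim: r => [|i r IH]; first by rewrite big_nil; exact: cen0.
by rewrite big_cons; apply: cenD.
Qed.

Lemma Pdirect : (P false :&: P true = 0)%VS.
Proof. by apply/directv_addP; exact: (lsa_direct ax). Qed.
Lemma Pfull : (P false + P true)%VS = fullv.
Proof. exact: (lsa_full ax). Qed.

Lemma Pdisj b u v : u \in P b -> v \in P (~~ b) -> u + v = 0 -> u = 0.
Proof.
move=> hu hv /eqP; rewrite addr_eq0 => /eqP e.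
have : u \in (P false :&: P true)%VS.
  rewrite memv_cap; case: b hu hv => /= hu hv.
  - by rewrite hu andbT e memvN.
  - by rewrite hu /= e memvN.
by rewrite Pdirect memv0 => /eqP.
Qed.

Lemma decomp x : exists2 x0, x0 \in P false & exists2 x1, x1 \in P true & x = x0 + x1.
Proof. by apply/memv_addP; rewrite Pfull memvf. Qed.

Lemma cen_hom c b y : cen c -> y \in P b ->
  forall c', c' \in P false -> forall c'', c'' \in P true -> c = c' + c'' ->
  br c' y = 0 /\ br c'' y = 0.
Proof.
move=> hc hy c0 h0 c1 h1 e.
have := hc y; rewrite e brDl => s.
have g0 : br c0 y \in P b by have := lsa_graded ax h0 hy.
have g1 : br c1 y \in P (~~ b) by have := lsa_graded ax h1 hy.
have z0 := Pdisj g0 g1 s.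
by split=> //; move: s; rewrite z0 add0r.
Qed.

Lemma cen_right c x : cen c -> br x c = 0.
Proof.
move=> hc.
have [c0 h0 [c1 h1 ec]] := decomp c.
have [x0 hx0 [x1 hx1 ex]] := decomp x.
have [a0 a1] := cen_hom hc hx0 h0 h1 ec.
have [b0 b1] := cen_hom hc hx1 h0 h1 ec.
rewrite ex ec !brDl !brDr.
rewrite (lsa_skew ax hx0 h0) (lsa_skew ax hx0 h1) (lsa_skew ax hx1 h0) (lsa_skew ax hx1 h1).
by rewrite a0 a1 b0 b1 !scaler0 !oppr0 !addr0.
Qed.


Lemma br_suml I (r : seq I) (Q : pred I) (G : I -> L) z :
  br (\sum_(i <- r | Q i) G i) z = \sum_(i <- r | Q i) br (G i) z.
Proof. exact: (lin_sum (brl z)). Qed.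
Lemma br_sumr I (r : seq I) (Q : pred I) (G : I -> L) z :
  br z (\sum_(i <- r | Q i) G i) = \sum_(i <- r | Q i) br z (G i).
Proof. exact: (lin_sum (brr z)). Qed.

Lemma cen_sym x y : cen (x - y) -> cen (y - x).
Proof. by move=> h; rewrite -opprB; apply: cenN. Qed.
Lemma cen_trans x y z : cen (x - y) -> cen (y - z) -> cen (x - z).
Proof. by move=> h1 h2; have := cenD h1 h2; rewrite addrA subrK. Qed.

Definition Bs := vbasis (P false) ++ vbasis (P true).
Definition Dsp : {vspace L} := <<[seq br x y | x <- Bs, y <- Bs]>>%VS.

Lemma Bs_basis : basis_of fullv Bs.
Proof. rewrite -Pfull; apply: cat_basis; [exact: (lsa_direct ax)|exact: vbasisP|exact: vbasisP]. Qed.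

Lemma Bs_hom x : x \in Bs -> exists b, x \in P b.
Proof.
rewrite mem_cat => /orP[h|h]; [exists false|exists true]; exact: vbasis_mem h.
Qed.

Lemma span_full (n : nat) (X : n.-tuple L) : basis_of fullv X -> forall x, x = \sum_i coord X i x *: X`_i.
Proof. by move=> hX x; apply: coord_span; rewrite (span_basis hX) memvf. Qed.

Lemma br_inD u v : br u v \in Dsp.
Proof.
have hb : basis_of fullv (in_tuple Bs) by exact: Bs_basis.
rewrite [u](span_full hb) br_suml; apply: memv_suml => i _.
rewrite brZl; apply: memvZ.
rewrite [v](span_full hb) br_sumr; apply: memv_suml => j _.
rewrite brZr; apply: memvZ; apply: memv_span; apply: allpairs_f; apply: mem_nth; exact: ltn_ord.
Qed.

Lemma der0 : der 0.
Proof. by exists [::]; rewrite big_nil. Qed.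
Lemma derD x y : der x -> der y -> der (x + y).
Proof. by move=> [s ->] [t ->]; exists (s ++ t); rewrite big_cat. Qed.
Lemma derZ a x : der x -> der (a *: x).
Proof.
move=> [s ->]; exists [seq (a *: q.1, q.2) | q <- s]; rewrite big_map scaler_sumr.
by apply: eq_bigr => q _; rewrite brZl.
Qed.
Lemma der_br x y : der (br x y).
Proof. by exists [:: (x, y)]; rewrite big_seq1. Qed.

Lemma derived_D x : der x <-> x \in Dsp.
Proof.
split.
  by move=> [s ->]; apply: memv_suml => q _; exact: br_inD.
move=> hx; rewrite (coord_span (X := in_tuple [seq br x y | x <- Bs, y <- Bs]) hx).
apply: (big_ind der); [exact: der0|exact: derD|].
move=> i _; apply: derZ.
have : (in_tuple [seq br x y | x <- Bs, y <- Bs])`_i \in [seq br x y | x <- Bs, y <- Bs].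
  by apply: mem_nth; exact: ltn_ord.
by case/allpairsP=> p [_ _ ->]; exact: der_br.
Qed.

End Basics.
Section Easy.
Variables (F : fieldType) (L M : lsa F) (f : L -> M).
Hypotheses (hf : lsa_hom f) (bf : bijective f).

Lemma iso_isoclinic : isoclinic_via f f.
Proof.
case: hf => flin feven fbr; case: bf => g fK gK.
have finj : injective f := can_inj fK.
split.
- by move=> x cx y; rewrite -(gK y) -fbr cx (lin0 flin).
- by move=> a x y; rewrite flin subrr; exact: cen0.
- by move=> b x hx; exists (f x); [exact: feven|rewrite subrr; exact: cen0].
- by move=> x y; rewrite fbr subrr; exact: cen0.
- by move=> x h y; apply: finj; rewrite fbr h (lin0 flin).
- by move=> y; exists (g y); rewrite gK subrr; exact: cen0.
- move=> x [s ->]; exists [seq (f q.1, f q.2) | q <- s].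
  by rewrite big_map (lin_sum flin); apply: eq_bigr => q _; rewrite fbr.
- by move=> a x y _ _; rewrite flin.
- by move=> b x _ hx; exact: feven.
- by move=> x y _ _; rewrite fbr.
- by move=> x y _ _; exact: finj.
- move=> y [s ->]; exists (\sum_(q <- s) lsa_br (g q.1) (g q.2)).
    by exists [seq (g q.1, g q.2) | q <- s]; rewrite big_map.
  by rewrite (lin_sum flin); apply: eq_bigr => q _; rewrite fbr !gK.
- move=> l m k r hk hr.
  rewrite -[k](subrK (f l)) -[r](subrK (f m)) brDl hk add0r brDr.
  by rewrite (cen_right _ hr) add0r fbr.
Qed.
End Easy.

Section Hard.
Variables (F : fieldType) (L M : lsa F) (phi theta : L -> M).
Hypotheses (hL : lsa_stem L) (hM : lsa_stem M) (hv : isoclinic_via phi theta).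
Local Notation cenL := (@lsa_center F L).
Local Notation cenM := (@lsa_center F M).
Local Notation derL := (@lsa_derived F L).
Local Notation derM := (@lsa_derived F M).
Local Notation PL := (lsa_part L).
Local Notation PM := (lsa_part M).
Local Notation DL := (Dsp L).

Lemma th0 : theta 0 = 0.
Proof.
have := theta_lin hv 1 (der0 L) (der0 L); rewrite !scale1r addr0 => h.
by apply: (addrI (theta 0)); rewrite addr0 -{1}h.
Qed.

Lemma thD x y : x \in DL -> y \in DL -> theta (x + y) = theta x + theta y.
Proof.
move=> /derived_D hx /derived_D hy.
by have := theta_lin hv 1 hx hy; rewrite !scale1r.
Qed.
Lemma thZ a x : x \in DL -> theta (a *: x) = a *: theta x.
Proof.
move=> /derived_D hx.
by have := theta_lin hv a hx (der0 L); rewrite !addr0 th0 addr0.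
Qed.
Lemma th_sum I (r : seq I) (G : I -> L) : (forall i, G i \in DL) ->
  theta (\sum_(i <- r) G i) = \sum_(i <- r) theta (G i).
Proof.
move=> h; elim: r => [|i r IH]; first by rewrite !big_nil th0.
rewrite !big_cons thD ?IH //; apply: memv_suml => j _; exact: h.
Qed.

Lemma phi0c : cenM (phi 0).
Proof.
have := phi_lin hv 1 0 0; rewrite scale1r addr0 scale1r opprD addrA subrr add0r.
by move/cenN; rewrite opprK.
Qed.
Lemma phiDc x y : cenM (phi (x + y) - (phi x + phi y)).
Proof. by have := phi_lin hv 1 x y; rewrite !scale1r. Qed.
Lemma phiZc a x : cenM (phi (a *: x) - a *: phi x).
Proof.
have := phi_lin hv a x 0; rewrite !addr0 => h.
have := cenD h phi0c; by rewrite opprD addrA subrK.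
Qed.
Lemma phi_sumc I (r : seq I) (G : I -> L) :
  cenM (phi (\sum_(i <- r) G i) - \sum_(i <- r) phi (G i)).
Proof.
elim: r => [|i r IH]; first by rewrite !big_nil subr0; exact: phi0c.
rewrite !big_cons; apply: (cen_trans (phiDc _ _)).
by rewrite opprD addrACA subrr add0r; exact: IH.
Qed.

Lemma theta_phi x : x \in DL -> cenM (theta x - phi x).
Proof.
move=> /derived_D [s ->].
rewrite th_sum; last by move=> q; exact: br_inD.
apply: (@cen_trans _ _ _ (\sum_(q <- s) phi (lsa_br q.1 q.2))); last first.
  by apply: cen_sym; exact: phi_sumc.
rewrite -sumrB; apply: cen_sum => q.
rewrite (compat hv (k := phi q.1) (r := phi q.2)); try by rewrite subrr; exact: cen0.
by apply: cen_sym; exact: (phi_br hv).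
Qed.

End Hard.
Section Hard2.
Variables (F : fieldType) (L M : lsa F) (phi theta : L -> M).
Hypotheses (hL : lsa_stem L) (hM : lsa_stem M) (hv : isoclinic_via phi theta).
Local Notation cenL := (@lsa_center F L).
Local Notation cenM := (@lsa_center F M).
Local Notation derL := (@lsa_derived F L).
Local Notation derM := (@lsa_derived F M).
Local Notation PL := (lsa_part L).
Local Notation PM := (lsa_part M).
Local Notation DL := (Dsp L).

Definition Tb b := (PL b :\: DL)%VS.
Definition Db b := (PL b :&: DL)%VS.
Definition Eb b := vbasis (Tb b) ++ vbasis (Db b).
Definition Es := Eb false ++ Eb true.

Lemma Eb_basis b : basis_of (PL b) (Eb b).
Proof.
rewrite basisEdim span_cat !(span_basis (vbasisP _)) addv_diff_cap subvv /=.
by rewrite size_cat !size_tuple addnC dimv_cap_compl.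
Qed.

Lemma Es_basis : basis_of fullv Es.
Proof.
rewrite -(Pfull L); apply: cat_basis; [exact: (lsa_direct (lsa_ax L))|exact: Eb_basis|exact: Eb_basis].
Qed.

Lemma Es_hom v : v \in Es -> exists b, v \in PL b.
Proof.
rewrite mem_cat => /orP[h|h]; [exists false|exists true]; exact: (basis_mem (Eb_basis _) h).
Qed.

Lemma D_graded : (DL <= Db false + Db true)%VS.
Proof.
apply/span_subvP => g /allpairsP [p [h1 h2 ->]].
have [i hi] := Bs_hom h1; have [j hj] := Bs_hom h2.
have hg := lsa_graded (lsa_ax L) hi hj.
have hD := br_inD p.1 p.2.
case E: (i (+) j) hg => hg.
  by apply: (subvP (addvSr _ _)); rewrite memv_cap hg hD.
by apply: (subvP (addvSl _ _)); rewrite memv_cap hg hD.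
Qed.

Definition pb (v : L) := v \in PL true.

Lemma hlift v : exists y : M, v \in PL (pb v) -> y \in PM (pb v) /\ cenM (phi v - y).
Proof.
case h: (v \in PL (pb v)); last by exists 0.
by have [y hy hc] := phi_even hv h; exists y.
Qed.

Definition lift v := proj1_sig (constructive_indefinite_description _ (hlift v)).
Lemma liftP v : v \in PL (pb v) -> lift v \in PM (pb v) /\ cenM (phi v - lift v).
Proof. exact: (proj2_sig (constructive_indefinite_description _ (hlift v))). Qed.

Definition w v := if v \in DL then theta v else lift v.
Definition ET := in_tuple Es.
Definition f x := \sum_i coord ET i x *: w (ET`_i).

Lemma flin a x y : f (a *: x + y) = a *: f x + f y.
Proof.
rewrite /f scaler_sumr -big_split; apply: eq_bigr => i _.
by rewrite linearP /= scalerDl scalerA.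
Qed.

Lemma fE v : v \in Es -> f v = w v.
Proof.
move=> hv'.
have hfree : free ET by exact: (basis_free Es_basis).
have ii : (index v Es < size Es)%N by rewrite index_mem.
pose i : 'I_(size Es) := Ordinal ii.
have ev : v = ET`_i by rewrite /= nth_index.
rewrite /f {1}ev.
under eq_bigr => j _ do rewrite coord_free //.
rewrite (bigD1 i) //= eqxx scale1r big1 ?addr0 -?ev //.
by move=> j /negbTE hj; rewrite eq_sym hj scale0r.
Qed.


Lemma f_span U : {subset vbasis U <= Es} -> forall x, x \in U ->
  f x = \sum_(i < \dim U) coord (vbasis U) i x *: w ((vbasis U)`_i).
Proof.
move=> hU x hx; rewrite {1}(coord_vbasis hx) (lin_sum flin).
apply: eq_bigr => i _; rewrite (linZ flin) fE //; apply: hU; apply: mem_nth.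
by rewrite size_tuple.
Qed.

Lemma sub_Eb_T b : {subset vbasis (Tb b) <= Es}.
Proof. by move=> v hv1; rewrite mem_cat; case: b hv1 => hv1; rewrite /Eb !mem_cat hv1 ?orbT. Qed.
Lemma sub_Eb_D b : {subset vbasis (Db b) <= Es}.
Proof. by move=> v hv1; rewrite mem_cat; case: b hv1 => hv1; rewrite /Eb !mem_cat hv1 ?orbT. Qed.

Lemma f_theta_Db b x : x \in Db b -> f x = theta x.
Proof.
move=> hx; rewrite (f_span (@sub_Eb_D b) hx) {2}(coord_vbasis hx).
have hm : forall i : 'I_(\dim (Db b)), (vbasis (Db b))`_i \in DL.
  move=> i; have := vbasis_mem (mem_nth 0 (_ : (i < size (vbasis (Db b)))%N)).
  by rewrite size_tuple => /(_ (ltn_ord i)); rewrite memv_cap => /andP[].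
rewrite (th_sum hv); last by move=> i; apply: memvZ.
by apply: eq_bigr => i _; rewrite /w hm (thZ hv).
Qed.

Lemma f_theta x : x \in DL -> f x = theta x.
Proof.
move=> /(subvP D_graded) /memv_addP [u hu [v hv' ->]].
rewrite (linD flin) !(f_theta_Db hu) (f_theta_Db hv') (thD hv) //.
  by move: hu; rewrite memv_cap => /andP[].
by move: hv'; rewrite memv_cap => /andP[].
Qed.


Lemma Es_not0 v : v \in Es -> v != 0.
Proof. exact: (basis_not0 Es_basis). Qed.

Lemma Es_pb v : v \in Es -> v \in PL (pb v).
Proof.
move=> hE; rewrite /pb; case h: (v \in PL true) => //.
have [[] hb] := Es_hom hE => //; by rewrite h in hb.
Qed.

Lemma pb_eq v b : v \in Es -> v \in PL b -> pb v = b.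
Proof.
move=> hE hb; rewrite /pb; case: b hb => // hb.
apply/negP => h1; have := Es_not0 hE.
have : v \in (PL false :&: PL true)%VS by rewrite memv_cap hb h1.
by rewrite (Pdirect L) memv0 => ->.
Qed.

Lemma w_even v b : v \in Es -> v \in PL b -> w v \in PM b.
Proof.
move=> hE hb; rewrite /w; case: ifP => hD.
  by apply: (theta_even hv) => //; apply/derived_D.
by have [] := liftP (Es_pb hE); rewrite (pb_eq hE hb).
Qed.

Lemma w_phi v : v \in Es -> cenM (phi v - w v).
Proof.
move=> hE; rewrite /w; case: ifP => hD.
  by apply: cen_sym; exact: (theta_phi hv hD).
by have [] := liftP (Es_pb hE).
Qed.

Lemma f_even b x : x \in PL b -> f x \in PM b.
Proof.
rewrite -[PL b](addv_diff_cap _ DL) => /memv_addP [u hu [v hv' ->]].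
rewrite (linD flin); apply: memvD.
  rewrite (f_span (@sub_Eb_T b) hu); apply: memv_suml => i _; apply: memvZ.
  have hi : (vbasis (Tb b))`_i \in vbasis (Tb b) by apply: mem_nth; rewrite size_tuple.
  apply: w_even; first exact: sub_Eb_T hi.
  by have := vbasis_mem hi; rewrite /Tb => /(subvP (diffvSl _ _)).
rewrite (f_span (@sub_Eb_D b) hv'); apply: memv_suml => i _; apply: memvZ.
have hi : (vbasis (Db b))`_i \in vbasis (Db b) by apply: mem_nth; rewrite size_tuple.
apply: w_even; first exact: sub_Eb_D hi.
by have := vbasis_mem hi; rewrite /Db memv_cap => /andP[].
Qed.

Lemma f_phi x : cenM (f x - phi x).
Proof.
have ex := span_full (X := ET) Es_basis x.
have -> : phi x = phi (\sum_i coord ET i x *: ET`_i) by rewrite -ex.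
rewrite /f.
apply: (@cen_trans _ _ _ (\sum_i coord ET i x *: phi ET`_i)).
  rewrite -sumrB; apply: cen_sum => i; rewrite -scalerBr; apply: cenZ.
  by apply: cen_sym; apply: w_phi; apply: mem_nth; exact: ltn_ord.
apply: (@cen_trans _ _ _ (\sum_i phi (coord ET i x *: ET`_i))).
  by rewrite -sumrB; apply: cen_sum => i; apply: cen_sym; exact: (phiZc hv).
by apply: cen_sym; exact: (phi_sumc hv).
Qed.

Lemma f_br x y : f (lsa_br x y) = lsa_br (f x) (f y).
Proof.
by rewrite f_theta ?br_inD //; apply: (compat hv); exact: f_phi.
Qed.

Lemma f_inj : injective f.
Proof.
have k : forall x, f x = 0 -> x = 0.
  move=> x h.
  have cx : cenM (phi x) by have := cenN (f_phi x); rewrite h sub0r opprK.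
  have dx := hL (phi_inj hv cx).
  have := f_theta (proj1 (derived_D x) dx); rewrite h => /esym; rewrite -(th0 hv) => e.
  exact: (theta_inj hv dx (der0 L) e).
move=> x y e; apply/eqP; rewrite -subr_eq0; apply/eqP; apply: k.
by rewrite (linB flin) e subrr.
Qed.

Lemma f_surj y : exists x, f x = y.
Proof.
have [x hx] := phi_surj hv y.
have c : cenM (y - f x) by apply: (cen_trans hx); apply: cen_sym; exact: f_phi.
have [d hd e] := theta_surj hv (hM c).
exists (x + d); rewrite (linD flin) (f_theta (proj1 (derived_D d) hd)).
by rewrite e addrC subrK.
Qed.

Lemma hard_iso : lsa_isomorphic L M.
Proof.
exists f; split; first by split; [exact: flin|exact: f_even|exact: f_br].
pose g y := proj1_sig (constructive_indefinite_description _ (f_surj y)).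
have gK : cancel g f by move=> y; exact: (proj2_sig (constructive_indefinite_description _ (f_surj y))).
exists g => //; move=> x; apply: f_inj; by rewrite gK.
Qed.

End Hard2.

Unset Implicit Arguments.
Set Strict Implicit.

Theorem theorem3p6 (F : fieldType) (L M : lsa F)
  (hchar2 : (2 \notin [pchar F])%N) (hchar3 : (3 \notin [pchar F])%N)
  (hL : lsa_stem L) (hM : lsa_stem M) :
  lsa_isoclinic L M <-> lsa_isomorphic L M.
Proof.
split.
  by move=> [phi [theta h]]; exact: (hard_iso hL hM h).
by move=> [f [hf bf]]; exists f, f; exact: iso_isoclinic.
Qed.
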